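(* Assume that $(R,\mathfrak m)$ is $F$-pure and let $\mathfrak a$ be an ideal of $R$. Then $(0:_E\mathfrak a)\subseteq(\operatorname{ann}_{\Phi(E)}(\mathfrak aR[x,f]))_0$ if and only if $\mathfrak a$ is $\Phi(E)$-special and $(\operatorname{ann}_{\Phi(E)}(\mathfrak aR[x,f]))_0=(0:_E\mathfrak a)$.
   Context: $(R,\mathfrak m)$ is a commutative Noetherian local ring of prime characteristic $p$. $R$ is $F$-pure if for every $R$-module $M$ the map $M\to R^{(1)}\otimes_RM$, $m\mapsto1\otimes m$, is injective ($R^{(1)}$ = $R$ with right structure via $r\mapsto r^p$). The Frobenius skew polynomial ring $R[x,f]$ consists of polynomials $\sum r_ix^i$, free left $R$-module on $(x^i)_{i\ge0}$, with $xr=r^px$; graded with $n$th component $Rx^n$. $E=E_R(R/\mathfrak m)$; $\Phi(E)=R[x,f]\otimes_RE=\bigoplus_nRx^n\otimes_RE$, with $0$th component $R\otimes_RE$ identified with $E$. An ideal is $\Phi(E)$-special if it equals $(0:_RN)$ for some $R[x,f]$-submodule $N$ of $\Phi(E)$. $\operatorname{ann}_{\Phi(E)}(\mathfrak aR[x,f])$ is the $R[x,f]$-submodule of $\Phi(E)$ consisting of elements annihilated by all $rx^n$ with $r\in\mathfrak a$, $n\ge0$, and $(\cdot)_0$ denotes its $0$th component, a submodule of $E$. *)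

(* Defs.v *)
From HB Require Import structures.
From mathcomp Require Import all_boot all_order all_algebra.
Set Implicit Arguments. Unset Strict Implicit. Unset Printing Implicit Defensive.
Import GRing.Theory.
Local Open Scope ring_scope.

Definition is_ideal (R : comNzRingType) (I : R -> Prop) : Prop :=
  I 0 /\ (forall x y, I x -> I y -> I (x + y)) /\ (forall r x, I x -> I (r * x)).

Definition fg_ideal (R : comNzRingType) (I : R -> Prop) : Prop :=
  exists s : seq R, forall x,
    I x <-> exists c : nat -> R, x = \sum_(i < size s) c i * s`_i.

Definition noetherian (R : comNzRingType) : Prop :=
  forall I : R -> Prop, is_ideal I -> fg_ideal I.

Definition local_with (R : comNzRingType) (m : R -> Prop) : Prop :=
  is_ideal m /\ ~ m 1 /\ (forall x, ~ m x -> exists y, x * y = 1).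

Definition R_linear (R : comNzRingType) (M N : lmodType R) (f : M -> N) : Prop :=
  forall r x y, f (r *: x + y) = r *: f x + f y.

Definition frob_semilinear (R : comNzRingType) (p n : nat) (M N : lmodType R)
  (f : M -> N) : Prop :=
  (forall x y, f (x + y) = f x + f y) /\
  (forall r x, f (r *: x) = (r ^+ (p ^ n)) *: f x).

(* (T, tau) is the module R x^n (x)_R M, with tau m = x^n (x) m, characterised by
   its universal property (extension of scalars along F^n : R -> R). *)
Definition frob_base_change (R : comNzRingType) (p n : nat) (M T : lmodType R)
  (tau : M -> T) : Prop :=
  frob_semilinear p n tau /\
  forall (N : lmodType R) (phi : M -> N), frob_semilinear p n phi ->
    (exists psi : T -> N, R_linear psi /\ forall x, psi (tau x) = phi x) /\
    (forall psi1 psi2 : T -> N, R_linear psi1 -> R_linear psi2 ->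
       (forall x, psi1 (tau x) = psi2 (tau x)) -> forall t, psi1 t = psi2 t).

(* F-purity: for every R-module M, M -> R^(1) (x)_R M, m |-> 1 (x) m is injective. *)
Definition Fpure (R : comNzRingType) (p : nat) : Prop :=
  forall (M T : lmodType R) (tau : M -> T), frob_base_change p 1 tau -> injective tau.

Definition injective_module (R : comNzRingType) (E : lmodType R) : Prop :=
  forall (A B : lmodType R) (f : A -> B) (g : A -> E),
    R_linear f -> injective f -> R_linear g ->
    exists h : B -> E, R_linear h /\ forall x, h (f x) = g x.

(* E is an injective hull of R/m: E injective, containing e0 with R e0 ~ R/m,
   and R e0 essential in E. *)
Definition injective_hull (R : comNzRingType) (m : R -> Prop) (E : lmodType R) : Prop :=
  injective_module E /\
  exists e0 : E, (forall r, r *: e0 = 0 <-> m r) /\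
    (forall e : E, e != 0 -> exists r, r *: e != 0 /\ exists s, r *: e = s *: e0).

(* Data of Phi(E) = (+)_n R x^n (x)_R E: T n = R x^n (x)_R E, tau n e = x^n (x) e,
   xmap n : T n -> T n.+1 is the action of x. *)
Definition Phi_data (R : comNzRingType) (p : nat) (E : lmodType R)
  (T : nat -> lmodType R) (tau : forall n, E -> T n)
  (xmap : forall n, T n -> T n.+1) : Prop :=
  (forall n, frob_base_change p n (tau n)) /\
  (forall n t1 t2, xmap n (t1 + t2) = xmap n t1 + xmap n t2) /\
  (forall n r t, xmap n (r *: t) = (r ^+ p) *: xmap n t) /\
  (forall n e, xmap n (tau n e) = tau n.+1 e).

(* elements of the product; Phi(E) is the finitely supported ones *)
Definition phi_t (R : comNzRingType) (T : nat -> lmodType R) := forall n, T n.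

Definition finsupp (R : comNzRingType) (T : nat -> lmodType R) (z : phi_t T) : Prop :=
  exists N, forall n, (N <= n)%N -> z n = 0.

Definition phi0 (R : comNzRingType) (T : nat -> lmodType R) : phi_t T := fun n => 0.
Definition phi_add (R : comNzRingType) (T : nat -> lmodType R) (z w : phi_t T) : phi_t T :=
  fun n => z n + w n.
Definition phi_scale (R : comNzRingType) (T : nat -> lmodType R) (r : R) (z : phi_t T)
  : phi_t T := fun n => r *: z n.
Definition phi_x (R : comNzRingType) (T : nat -> lmodType R)
  (xmap : forall n, T n -> T n.+1) (z : phi_t T) : phi_t T :=
  fun n => match n return T n with 0 => 0 | k.+1 => xmap k (z k) end.
Definition phi_deg0 (R : comNzRingType) (T : nat -> lmodType R) (t : T 0) : phi_t T :=
  fun n => match n return T n with 0 => t | _ => 0 end.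

Definition RXf_submodule (R : comNzRingType) (T : nat -> lmodType R)
  (xmap : forall n, T n -> T n.+1) (N : phi_t T -> Prop) : Prop :=
  (forall z, N z -> finsupp z) /\ N (phi0 T) /\
  (forall z w, N z -> N w -> N (phi_add z w)) /\
  (forall r z, N z -> N (phi_scale r z)) /\
  (forall z, N z -> N (phi_x xmap z)).

Definition annR (R : comNzRingType) (T : nat -> lmodType R) (N : phi_t T -> Prop)
  (r : R) : Prop := forall z, N z -> phi_scale r z = phi0 T.

Definition PhiE_special (R : comNzRingType) (T : nat -> lmodType R)
  (xmap : forall n, T n -> T n.+1) (a : R -> Prop) : Prop :=
  exists N, RXf_submodule xmap N /\ forall r, a r <-> annR N r.

Definition annPhi (R : comNzRingType) (T : nat -> lmodType R)
  (xmap : forall n, T n -> T n.+1) (a : R -> Prop) (z : phi_t T) : Prop :=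
  finsupp z /\
  forall r n, a r -> phi_scale r (iter n (phi_x xmap) z) = phi0 T.

(* its 0th component, as a subset of E (via E = R (x)_R E, e |-> 1 (x) e) *)
Definition annPhi0 (R : comNzRingType) (E : lmodType R) (T : nat -> lmodType R)
  (tau : forall n, E -> T n) (xmap : forall n, T n -> T n.+1) (a : R -> Prop)
  (e : E) : Prop :=
  annPhi xmap a (@phi_deg0 R T (tau 0%N e)).

Definition colonE (R : comNzRingType) (E : lmodType R) (a : R -> Prop) (e : E) : Prop :=
  forall r, a r -> r *: e = 0.

(* Main.v *)
Require Import Defs.
From HB Require Import structures.
From mathcomp Require Import all_boot all_order all_algebra.
From mathcomp Require Import boolp ring.
From Stdlib Require Import Classical.
Set Implicit Arguments. Unset Strict Implicit. Unset Printing Implicit Defensive.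
Import GRing.Theory.
Local Open Scope ring_scope.

Section Sub.
Variable R : comNzRingType.
Variable P : R -> Prop.
Hypothesis P0 : P 0.
Hypothesis PD : forall x y, P x -> P y -> P (x + y).
Hypothesis PZ : forall c x, P x -> P (c * x).

Definition subS of P 0 & (forall x y, P x -> P y -> P (x + y)) & (forall c x, P x -> P (c * x)) := {x : R | P x}.
Local Notation S := (subS P0 PD PZ).
HB.instance Definition _ := gen_eqMixin S.
HB.instance Definition _ := gen_choiceMixin S.

Lemma PN x : P x -> P (- x).
Proof. by move=> h; rewrite -mulN1r; apply: PZ. Qed.

Definition s0 : S := exist _ 0 P0.
Definition sadd (u v : S) : S := exist _ (sval u + sval v) (PD (svalP u) (svalP v)).
Definition sopp (u : S) : S := exist _ (- sval u) (PN (svalP u)).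
Definition sscale (c : R) (u : S) : S := exist _ (c * sval u) (PZ c (svalP u)).

Lemma seq (u v : S) : sval u = sval v -> u = v.
Proof.
case: u => x hx; case: v => y hy /= e; subst y.
by rewrite (Prop_irrelevance hx hy).
Qed.

Lemma saddA : associative sadd. Proof. by move=> u v w; apply: seq => /=; rewrite addrA. Qed.
Lemma saddC : commutative sadd. Proof. by move=> u v; apply: seq => /=; rewrite addrC. Qed.
Lemma sadd0 : left_id s0 sadd. Proof. by move=> u; apply: seq => /=; rewrite add0r. Qed.
Lemma saddN : left_inverse s0 sopp sadd. Proof. by move=> u; apply: seq => /=; rewrite addNr. Qed.

HB.instance Definition _ := GRing.isZmodule.Build S saddA saddC sadd0 saddN.

Lemma sscaleA a b v : sscale a (sscale b v) = sscale (a * b) v.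
Proof. by apply: seq => /=; rewrite mulrA. Qed.
Lemma sscale1 : left_id 1 sscale. Proof. by move=> u; apply: seq => /=; rewrite mul1r. Qed.
Lemma sscaleDr : right_distributive sscale +%R.
Proof. by move=> c u v; apply: seq => /=; rewrite mulrDr. Qed.
Lemma sscaleDl v : {morph sscale^~ v : a b / a + b}.
Proof. by move=> a b; apply: seq => /=; rewrite mulrDl. Qed.

HB.instance Definition _ := GRing.Zmodule_isLmodule.Build R S sscaleA sscale1 sscaleDr sscaleDl.

Definition sincl (u : S) : R^o := sval u.
Lemma sincl_lin : R_linear sincl.
Proof. by []. Qed.
Lemma sincl_inj : injective sincl.
Proof. by move=> u v; apply: seq. Qed.
End Sub.

Lemma R_linear0 (R : comNzRingType) (M N : lmodType R) (h : M -> N) :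
  R_linear h -> h 0 = 0.
Proof.
move=> hl; have := hl 1 0 0; rewrite !scale1r addr0 => e.
by apply: (addrI (h 0)); rewrite -e addr0.
Qed.

Lemma matlis (R : comNzRingType) (m : R -> Prop) (hloc : local_with m)
  (E : lmodType R) (hE : injective_hull m E) (a : R -> Prop) (ha : is_ideal a)
  (r : R) (hr : ~ a r) : exists e : E, colonE a e /\ r *: e <> 0.
Proof.
case: hE => hinj [e0 [he0 _]].
case: ha => a0 [aD aZ].
case: hloc => _ [m1 munit].
pose P (y : R) := exists x s, a x /\ y = x + s * r.
have P0 : P 0 by exists 0, 0; split => //; rewrite mul0r addr0.
have PD : forall x y, P x -> P y -> P (x + y).
  move=> _ _ [x [s [hx ->]]] [x' [s' [hx' ->]]].
  exists (x + x'), (s + s'); split; first exact: aD.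
  by rewrite mulrDl addrACA.
have PZ : forall c x, P x -> P (c * x).
  move=> c _ [x [s [hx ->]]]; exists (c * x), (c * s); split; first exact: aZ.
  by rewrite mulrDr mulrA.
(* key: (a : r) in m *)
have key : forall s s' x x', a x -> a x' -> x + s * r = x' + s' * r -> s *: e0 = s' *: e0.
  move=> s s' x x' hx hx' e.
  apply/eqP; rewrite -subr_eq0 -scalerBl; apply/eqP; apply/he0.
  apply: NNPP => nm; have [u hu] := munit _ nm.
  apply: hr.
  have h1 : (s - s') * r = x' - x.
    have -> : (s - s') * r = (x + s * r) - x - s' * r by ring.
    rewrite e; ring.
  have hxx : a (x' - x) by apply: aD => //; rewrite -mulN1r; apply: aZ.
  have -> : r = u * ((s - s') * r) by rewrite mulrA (mulrC u) hu mul1r.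
  by rewrite h1; apply: aZ.
pose A := subS P0 PD PZ.
have gdef : forall y : A, {t | exists x, a x /\ sval y = x + t * r}.
  move=> y; apply: cid; case: y => y [x [s [hx hy]]] /=; exists s, x; by split.
pose g (y : A) : E := (sval (gdef y)) *: e0.
have gspec : forall (y : A) x s, a x -> sval y = x + s * r -> g y = s *: e0.
  move=> y x s hx hy.
  have [x' [hx' hy']] := svalP (gdef y).
  by apply: (key _ _ x' x) => //; rewrite -hy' hy.
have glin : R_linear g.
  move=> c u v.
  have [x [su [hx hu]]] := svalP u.
  have [x' [sv [hx' hv]]] := svalP v.
  rewrite (gspec u x su) // (gspec v x' sv) // (gspec _ (c * x + x') (c * su + sv)).
  - by rewrite scalerA scalerDl.
  - by apply: aD => //; apply: aZ.
  - rewrite /= hu hv; ring.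
have [h [hlin hh]] := hinj _ _ (@sincl _ _ P0 PD PZ) g (@sincl_lin _ _ P0 PD PZ)
   (@sincl_inj _ _ P0 PD PZ) glin.
exists (h (1 : R^o)); split.
  move=> x hx.
  have Px : P x by exists x, 0; split => //; rewrite mul0r addr0.
  have hq := hlin x (1 : R^o) 0; rewrite (R_linear0 hlin) !addr0 in hq.
  rewrite -hq.
  have -> : x *: (1 : R^o) = sincl (exist _ x Px) by rewrite /sincl /= /GRing.scale /= mulr1.
  rewrite hh (gspec _ x 0) //= ?scale0r //.
  by rewrite mul0r addr0.
have Pr : P r by exists 0, 1; split => //; rewrite mul1r add0r.
have hq := hlin r (1 : R^o) 0; rewrite (R_linear0 hlin) !addr0 in hq.
rewrite -hq.
have -> : r *: (1 : R^o) = sincl (exist _ r Pr) by rewrite /sincl /= /GRing.scale /= mulr1.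
rewrite hh (gspec _ 0 1) //= ?scale1r ?mul1r ?add0r // => e00.
by apply: m1; apply/he0; rewrite scale1r.
Qed.

From Stdlib Require Import FunctionalExtensionality.

Lemma phi_eq (R : comNzRingType) (T : nat -> lmodType R) (z w : phi_t T) :
  (forall n, z n = w n) -> z = w.
Proof. exact: functional_extensionality_dep. Qed.

Unset Implicit Arguments.
Section PhiLemmas.
Variables (R : comNzRingType) (p : nat) (T : nat -> lmodType R)
  (xmap : forall n, T n -> T n.+1).
Hypothesis xadd : forall n t1 t2, xmap n (t1 + t2) = xmap n t1 + xmap n t2.
Hypothesis xscale : forall n r t, xmap n (r *: t) = (r ^+ p) *: xmap n t.

Lemma xmap0 n : xmap n 0 = 0.
Proof. by have := xadd n 0 0; rewrite addr0 => e; apply: (addrI (xmap n 0)); rewrite -e addr0. Qed.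

Lemma phi_x0 : phi_x xmap (phi0 T) = phi0 T.
Proof. by apply: phi_eq => -[|n] //=; rewrite /phi0 xmap0. Qed.

Lemma phi_xD z w : phi_x xmap (phi_add z w) = phi_add (phi_x xmap z) (phi_x xmap w).
Proof. by apply: phi_eq => -[|n] /=; rewrite /phi_add ?addr0 ?xadd. Qed.

Lemma phi_xZ c z : phi_x xmap (phi_scale c z) = phi_scale (c ^+ p) (phi_x xmap z).
Proof. by apply: phi_eq => -[|n] /=; rewrite /phi_scale ?scaler0 ?xscale. Qed.

Lemma iter0 n : iter n (phi_x xmap) (phi0 T) = phi0 T.
Proof. by elim: n => //= n ->; rewrite phi_x0. Qed.

Lemma iterD n z w : iter n (phi_x xmap) (phi_add z w) =
  phi_add (iter n (phi_x xmap) z) (iter n (phi_x xmap) w).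
Proof. by elim: n => //= n ->; rewrite phi_xD. Qed.

Lemma iterZ n c z : exists c', iter n (phi_x xmap) (phi_scale c z) =
  phi_scale c' (iter n (phi_x xmap) z).
Proof.
elim: n => [|n [c' IH]] /=; first by exists c.
by exists (c' ^+ p); rewrite IH phi_xZ.
Qed.

Lemma annPhi_sub (a : R -> Prop) : RXf_submodule xmap (annPhi xmap a).
Proof.
split; first by move=> z [].
split.
  split; first by exists 0%N.
  by move=> r n _; rewrite iter0; apply: phi_eq => k; rewrite /phi_scale /phi0 scaler0.
split.
  move=> z w [[N1 h1] H1] [[N2 h2] H2]; split.
    exists (maxn N1 N2) => n hn; rewrite /phi_add h1 ?h2 ?addr0 //.
      exact: leq_trans (leq_maxr _ _) hn.
    exact: leq_trans (leq_maxl _ _) hn.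
  move=> r n ar; rewrite iterD; apply: phi_eq => k.
  have := congr1 (fun f => f k) (H1 r n ar); have := congr1 (fun f => f k) (H2 r n ar).
  by rewrite /phi_scale /phi_add /phi0 scalerDr => -> ->; rewrite addr0.
split.
  move=> c z [[N h] H]; split.
    by exists N => n hn; rewrite /phi_scale h // scaler0.
  move=> r n ar; have [c' ->] := iterZ n c z; apply: phi_eq => k.
  have := congr1 (fun f => f k) (H r n ar).
  by rewrite /phi_scale /phi0 scalerA mulrC -scalerA => ->; rewrite scaler0.
move=> z [[N h] H]; split.
  exists N.+1 => -[|n] hn //=; by rewrite h // xmap0.
by move=> r n ar; rewrite -iterSr; apply: H.
Qed.
End PhiLemmas.
Set Implicit Arguments.

Theorem lemma1p1 (R : comNzRingType) (p : nat) (hp : p \in [pchar R])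
  (m : R -> Prop) (hloc : local_with m) (hnoeth : noetherian R) (hF : Fpure R p)
  (E : lmodType R) (hE : injective_hull m E)
  (T : nat -> lmodType R) (tau : forall n, E -> T n)
  (xmap : forall n, T n -> T n.+1) (hPhi : Phi_data p tau xmap)
  (a : R -> Prop) (ha : is_ideal a) :
  (forall e : E, colonE a e -> annPhi0 tau xmap a e) <->
  (PhiE_special xmap a /\ forall e : E, annPhi0 tau xmap a e <-> colonE a e).
Proof.
case: hPhi => hbc [xadd [xscale _]].
have [[t0add t0scale] t0univ] := hbc 0%N.
have t0Z : forall r e, tau 0%N (r *: e) = r *: tau 0%N e.
  by move=> r e; rewrite t0scale expn0 expr1.
have t00 : tau 0%N 0 = 0.
  by have := t0add 0 0; rewrite addr0 => e; apply: (addrI (tau 0%N 0)); rewrite -e addr0.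
have t0inj : injective (tau 0%N).
  have sid : frob_semilinear p 0 (fun e : E => e) by split => // r x; rewrite expn0 expr1.
  have [[psi [_ hpsi]] _] := t0univ E (fun e => e) sid.
  by move=> x y e; rewrite -(hpsi x) -(hpsi y) e.
have kill : forall r e, phi_scale r (phi_deg0 (tau 0%N e)) = phi0 T -> r *: e = 0.
  move=> r e h; have := congr1 (fun f => f 0%N) h; rewrite /phi_scale /phi_deg0 /phi0 /=.
  by rewrite -t0Z -t00 => /t0inj.
have back : forall e, annPhi0 tau xmap a e -> colonE a e.
  by move=> e [_ H] r ar; apply: kill; exact: (H r 0%N ar).
split; last by case=> _ H e ce; apply/H.
move=> H; split; last by move=> e; split; [apply: back | apply: H].
exists (annPhi xmap a); split; first exact: annPhi_sub.
move=> r; split.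
  by move=> ar z [_ Hz]; exact: (Hz r 0%N ar).
move=> hr; apply: NNPP => nar.
have [e [ce nre]] := matlis hloc hE ha nar.
by apply: nre; apply: kill; apply: hr; apply: H.
Qed.
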